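(* Let $p,p'\ge1$ with $|p-p'|=1$, $p_{\min}=\min\{p,p'\}$, and let $S=\alpha_{(p,p')}(S')$ where $S'$ is a Sturmian word (so $a^{p_{\min}}b$ is the short block of $S$). If $X$ is a palindrome that is maximal in $S$ and $|X|_b>0$, then $X=Uba^{p_{\min}}=a^{p_{\min}}bV$ for some words $U,V$.
   Context: $\alpha_{(p,p')}$ is the morphism $a\mapsto a^pb$, $b\mapsto a^{p'}b$. A Sturmian word is a right-infinite aperiodic word over $\{a,b\}$ with exactly $n+1$ factors of each length $n$. $|X|_b$ is the number of occurrences of $b$ in $X$. A palindrome $X$ is maximal in $S$ if $lXl'$ is a factor of $S$ for some letters $l\neq l'$. *)

(* Defs.v *)
From HB Require Import structures.
From mathcomp Require Import all_boot.
Set Implicit Arguments. Unset Strict Implicit. Unset Printing Implicit Defensive.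

Inductive letter := la | lb.

Definition letter_eqb (x y : letter) : bool :=
  match x, y with la, la | lb, lb => true | _, _ => false end.
Lemma letter_eqP : Equality.axiom letter_eqb.
Proof. by case; case; constructor. Qed.
HB.instance Definition _ := hasDecEq.Build letter letter_eqP.

Definition word := seq letter.
Definition infword := nat -> letter.

Definition subword (w : infword) (i n : nat) : word :=
  [seq w (i + k) | k <- iota 0 n].

Definition factor (u : word) (w : infword) : Prop :=
  exists i, u = subword w i (size u).

Definition aperiodic (w : infword) : Prop :=
  ~ (exists per N, 0 < per /\ forall i, N <= i -> w (i + per) = w i).

Definition complexity_n_plus_1 (w : infword) : Prop :=
  forall n, exists s : seq word,
    [/\ uniq s, size s = n.+1 &
        forall u, size u = n -> (factor u w <-> u \in s)].

Definition sturmian (w : infword) : Prop :=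
  aperiodic w /\ complexity_n_plus_1 w.

Definition alpha (p p' : nat) (l : letter) : word :=
  match l with
  | la => rcons (nseq p la) lb
  | lb => rcons (nseq p' la) lb
  end.

(* S = f(S') for a morphism f (with nonempty images) applied letterwise to the
   infinite word S': every image of a prefix of S' is a prefix of S. *)
Definition morph_image (f : letter -> word) (S' S : infword) : Prop :=
  forall n, let u := flatten [seq f (S' k) | k <- iota 0 n] in
            subword S 0 (size u) = u.

Definition palindrome (X : word) : Prop := rev X = X.

Definition count_b (X : word) : nat := count (pred1 lb) X.

Definition maximal_pal_in (X : word) (S : infword) : Prop :=
  palindrome X /\ exists l l' : letter, l != l' /\ factor (l :: rcons X l') S.

(* Main.v *)
Require Import Defs.
From mathcomp Require Import all_boot.
From mathcomp Require Import zify.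

Lemma subword_nth (S : infword) i n j : j < n -> nth la (subword S i n) j = S (i + j).
Proof.
move=> hj; rewrite /subword (nth_map 0); last by rewrite size_iota.
by rewrite nth_iota.
Qed.

Section Struct.
Variables (p p' : nat) (S' S : infword).
Hypothesis HS : morph_image (alpha p p') S' S.

Definition cc n := if S' n is la then p else p'.
Lemma blkE n : alpha p p' (S' n) = rcons (nseq (cc n) la) lb.
Proof. by rewrite /cc; case: (S' n). Qed.

Definition uu n := flatten [seq alpha p p' (S' k) | k <- iota 0 n].
Lemma uuS n : uu n.+1 = uu n ++ alpha p p' (S' n).
Proof. by rewrite /uu -addn1 iotaD map_cat flatten_cat /= cats0. Qed.

Lemma S_uu n j : j < size (uu n) -> S j = nth la (uu n) j.
Proof.
move=> hj; have := HS n; rewrite -/(uu n) => E.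
by rewrite -[in RHS]E subword_nth.
Qed.

Lemma S_blk n o : o <= cc n ->
  S (size (uu n) + o) = if o == cc n then lb else la.
Proof.
move=> ho.
have hs : size (uu n) + o < size (uu n.+1).
  by rewrite uuS size_cat blkE size_rcons size_nseq; lia.
rewrite (S_uu _ _ hs) uuS nth_cat ltnNge leq_addr /= addKn blkE nth_rcons size_nseq nth_nseq.
case: (ltngtP o (cc n)) ho => h _ //.
Qed.

Lemma size_uuS n : size (uu n.+1) = size (uu n) + (cc n).+1.
Proof. by rewrite uuS size_cat blkE size_rcons size_nseq. Qed.

Lemma locate j : exists n, size (uu n) <= j < size (uu n.+1).
Proof.
elim: j => [|j [n /andP [h1 h2]]].
  by exists 0; rewrite size_uuS /uu /=.
case: (ltnP j.+1 (size (uu n.+1))) => h3.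
  by exists n; rewrite h3 andbT; lia.
exists n.+1; rewrite (size_uuS n.+1); lia.
Qed.

Variable m : nat.
Hypothesis Hc : forall n, m <= cc n <= m.+1.

Lemma F1 j : exists t, t <= m.+1 /\ S (j + t) = lb.
Proof.
have [n /andP [h1 h2]] := locate j.
move: h2; rewrite size_uuS => h2.
exists (size (uu n) + cc n - j); split.
  have := Hc n; lia.
have -> : j + (size (uu n) + cc n - j) = size (uu n) + cc n by lia.
by rewrite S_blk // eqxx.
Qed.

Lemma F2 j t : S j = lb -> 1 <= t <= m -> S (j + t) = la.
Proof.
move=> hb ht.
have [n /andP [h1 h2]] := locate j.
move: h2; rewrite size_uuS => h2.
have hj : j = size (uu n) + cc n.
  case: (ltnP j (size (uu n) + cc n)) => h3; last by lia.
  have := @S_blk n (j - size (uu n)); rewrite (_ : size (uu n) + (j - size (uu n)) = j); last by lia.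
  rewrite hb => H; have := H ltac:(lia); case: eqP => //; lia.
have := @S_blk n.+1 (t.-1).
have := Hc n.+1 => hc.
rewrite (_ : size (uu n.+1) + t.-1 = j + t); last by rewrite size_uuS; lia.
case: eqP => [|_ ->//]; [lia|lia].
Qed.
End Struct.

Lemma letter_neq_b x : (x == lb) = false -> x = la.
Proof. by case: x. Qed.

Theorem mainTheorem6 (p p' : nat) (S' S : infword) (X : word) :
  1 <= p -> 1 <= p' -> (p == p'.+1) || (p' == p.+1) ->
  sturmian S' -> morph_image (alpha p p') S' S ->
  maximal_pal_in X S -> 0 < count_b X ->
  exists U V : word,
    X = U ++ lb :: nseq (minn p p') la /\ X = nseq (minn p p') la ++ lb :: V.
Proof.
move=> hp hp' hpp _ HS [hpal [l [l' [hll [i hi]]]]] hcb.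
set m := minn p p'.
have Hc : forall n, m <= cc p p' S' n <= m.+1.
  move=> n; rewrite /cc /m; case: (S' n); case/orP: hpp => /eqP ->; lia.
have f1 := @F1 p p' S' S HS m Hc; have f2 := @F2 p p' S' S HS m Hc.
set n := size X.
have Sget : forall k, k < n.+2 -> S (i + k) = nth la (l :: rcons X l') k.
  move=> k hk; rewrite {1}hi subword_nth //= size_rcons //.
have S0 : S i = l by rewrite -(addn0 i) Sget.
have SX : forall t, t < n -> S (i + 1 + t) = nth la X t.
  by move=> t ht; rewrite -addnA add1n Sget //= ?nth_rcons ?ht //; lia.
have Sl' : S (i + n.+1) = l'.
  by rewrite Sget //= nth_rcons ltnn eqxx.
have hbX : lb \in X by rewrite -has_pred1 has_count.
set k := index lb X.
have hk : k < n by rewrite index_mem.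
have hXk : nth la X k = lb by rewrite nth_index.
have hXa : forall t, t < k -> nth la X t = la.
  by move=> t ht; apply: letter_neq_b; have := before_find la ht.
have hrev : forall t, t < n -> nth la X t = nth la X (n - t.+1).
  by move=> t ht; have E : rev X = X := hpal; rewrite -[in LHS]E nth_rev.
have Xa' : forall t, n - k <= t < n -> S (i + 1 + t) = la.
  move=> t ht; rewrite SX; last lia.
  rewrite hrev; last lia.
  apply: hXa; lia.
have Xb' : S (i + 1 + (n - k.+1)) = lb.
  rewrite SX; last lia.
  rewrite hrev; last lia.
  by rewrite (_ : n - (n - k.+1).+1 = k) //; lia.
have Xk : S (i + 1 + k) = lb by rewrite SX.
have Xa : forall t, t < k -> S (i + 1 + t) = la.
  by move=> t ht; rewrite SX ?hXa //; lia.
have km : k = m.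
  clear Sget hi; case: l l' hll S0 Sl' => [] [] // _ S0 Sl'.
  -
    apply/eqP; rewrite eqn_leq; apply/andP; split.
    + have [t [ht Ht]] := f1 i.
      case: (leqP t k) => htk; last by lia.
      case: t ht Ht htk => [|t] ht Ht htk; first by rewrite addn0 S0 in Ht.
      by move: Ht; rewrite -addn1 addnA -[i + t + 1]addnA [t + 1]addnC addnA Xa.
    + case: (leqP m k) => // hkm.
      have := f2 (i + 1 + (n - k.+1)) k.+1 Xb' ltac:(lia).
      by rewrite (_ : i + 1 + (n - k.+1) + k.+1 = i + n.+1) ?Sl' //; lia.
  -
    apply/eqP; rewrite eqn_leq; apply/andP; split.
    + have [t [ht Ht]] := f1 (i + 1 + (n - k)).
      case: (leqP t k) => htk; last by lia.
      case: (ltnP t k) => htk'.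
        by move: Ht; rewrite -addnA Xa' //; lia.
      have htk2 : t = k by lia.
      by move: Ht; rewrite htk2 (_ : i + 1 + (n - k) + k = i + n.+1) ?Sl' //; lia.
    + case: (leqP m k) => // hkm.
      have := f2 i k.+1 S0 ltac:(lia).
      by rewrite -addn1 addnA -[i + k + 1]addnA [k + 1]addnC addnA Xk.
have hXdec : X = nseq k la ++ lb :: drop k.+1 X.
  rewrite -{1}(cat_take_drop k X) (drop_nth la hk) hXk.
  congr (_ ++ _); have hs : size (take k X) = k by rewrite size_take hk.
  rewrite -{2}hs; apply/all_pred1P/(all_nthP la) => t.
  rewrite hs => ht; rewrite nth_take //=; apply/eqP; exact: hXa.
exists (rev (drop k.+1 X)), (drop k.+1 X); rewrite -km; split => //.
by rewrite -{1}hpal {1}hXdec rev_cat rev_cons rev_nseq cat_rcons.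
Qed.
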